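(* Let $S\in\mathbb{S}^d_m$ and $G\in\mathcal{M}(S)$. Then the sets $\{(x,y):y\in P_G(x)\}$ and $\{(x,y):x\in P_G(y)\}$ are closed in $\mathbb{R}^{2d}$, the set $B:=\{(x,y):x\in P_G(y),\ P_G(x)\not\subset P_G(y)\}$ is an $F_\sigma$-set, and consequently $\{(x,y):x\in P_G(x)\subset P_G(y)\}$ is a Borel subset of $\mathbb{R}^{2d}$.
   Context: $\mathbb{S}^d_m$: symmetric invertible $d\times d$ real matrices with exactly $m$ positive eigenvalues; $S(x,y):=\langle x,Sy\rangle$. $G\subset\mathbb{R}^d$ is $S$-monotone if $S(x-y,x-y)\ge0$ for $x,y\in G$; maximal if not a strict subset of another $S$-monotone set; $\mathcal{M}(S)$ is the family of maximal $S$-monotone sets. $P_G(y):=\operatorname{argmax}_{x\in G}(S(x,y)-\frac12S(x,x))$, $y\in\mathbb{R}^d$. An $F_\sigma$-set is a countable union of closed sets. *)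

(* Defs.v *)
From HB Require Import structures.
From mathcomp Require Import all_boot all_order all_algebra.
From mathcomp Require Import all_classical all_reals all_analysis.
Set Implicit Arguments. Unset Strict Implicit. Unset Printing Implicit Defensive.
Import Order.TTheory GRing.Theory Num.Theory.
Import numFieldNormedType.Exports.
Local Open Scope classical_set_scope.
Local Open Scope ring_scope.

Definition Sform (R : realType) (d : nat) (S : 'M[R]_d) (x y : 'rV[R]_d) : R :=
  (x *m S *m y^T) 0 0.

(* S is in S^d_m: symmetric, invertible, and exactly m positive eigenvalues,
   counted with multiplicity (as roots of the characteristic polynomial). *)
Definition in_Sdm (R : realType) (d m : nat) (S : 'M[R]_d) : Prop :=
  S^T = S /\ S \in unitmx /\
  exists lam : 'I_d -> R,
    char_poly S = \prod_(i < d) ('X - (lam i)%:P) /\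
    #|[set i : 'I_d | 0 < lam i]| = m.

Definition S_monotone (R : realType) (d : nat) (S : 'M[R]_d) (G : set 'rV[R]_d) : Prop :=
  forall x y, G x -> G y -> 0 <= Sform S (x - y) (x - y).

Definition maximal_S_monotone (R : realType) (d : nat) (S : 'M[R]_d) (G : set 'rV[R]_d) : Prop :=
  S_monotone S G /\
  forall G', S_monotone S G' -> G `<=` G' -> G' = G.

Definition PG (R : realType) (d : nat) (S : 'M[R]_d) (G : set 'rV[R]_d) (y : 'rV[R]_d)
  : set 'rV[R]_d :=
  [set x | G x /\ forall z, G z ->
     Sform S z y - Sform S z z / 2 <= Sform S x y - Sform S x x / 2].

Definition F_sigma (T : topologicalType) (A : set T) : Prop :=
  exists F : nat -> set T, (forall n, closed (F n)) /\ A = \bigcup_n F n.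

Definition Borel (T : topologicalType) (A : set T) : Prop :=
  smallest (sigma_algebra setT) (@open T) A.

(* Main.v *)
Require Import Defs.
From HB Require Import structures.
From mathcomp Require Import all_boot all_order all_algebra.
From mathcomp Require Import all_classical all_reals all_analysis.
From mathcomp Require Import zify lra.
Import Order.TTheory GRing.Theory Num.Theory.
Import numFieldNormedType.Exports.
Local Open Scope classical_set_scope.
Local Open Scope ring_scope.
Section S.
Variables (R : realType) (d : nat) (S : 'M[R]_d).
Lemma cont_sum (T : topologicalType) n (F : 'I_n -> T -> R) :
  (forall i, continuous (F i)) -> continuous (fun t => \sum_(i < n) F i t).
Proof.
elim: n F => [|n IH] F HF.
  under eq_fun do rewrite big_ord0. exact: cst_continuous.
under eq_fun do rewrite big_ord_recr /=.
move=> x; apply: continuousD.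
  by apply: (IH (fun i => F (widen_ord (leqnSn n) i))).
exact: HF.
Qed.
Lemma Sform_cont (T : topologicalType) (a b : T -> 'rV[R]_d) :
  continuous a -> continuous b -> continuous (fun t => Sform S (a t) (b t)).
Proof.
move=> ca cb.
have E : forall x y : 'rV[R]_d, Sform S x y = \sum_(j < d) (\sum_(i < d) x 0 i * S i j) * y 0 j.
  move=> x y; rewrite /Sform !mxE; apply: eq_bigr => j _; rewrite !mxE.
  by congr (_ * _); apply: eq_bigr => i _; rewrite mxE.
under eq_fun do rewrite E.
apply: cont_sum => j x; apply: continuousM; last first.
  exact: (continuous_comp (cb x) (@coord_continuous R 1 d 0 j _)).

have H := @cont_sum T d (fun i t => a t 0 i * S i j). move: x; apply: H => i y.
apply: continuousM; last exact: cst_continuous.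
exact: (continuous_comp (ca y) (@coord_continuous R 1 d 0 i _)).
Qed.
Lemma h1 : hausdorff_space ('rV[R]_d * 'rV[R]_d)%type.
Proof. exact: norm_hausdorff. Qed.
Lemma fstc : continuous (@fst 'rV[R]_d 'rV[R]_d).
Proof. move=> p; exact: cvg_fst. Qed.
Lemma sndc : continuous (@snd 'rV[R]_d 'rV[R]_d).
Proof. move=> p; exact: cvg_snd. Qed.
Lemma Kc (n : R) : compact [set v : 'rV[R]_d | `|v| <= n].
Proof.
apply: bounded_closed_compact.
  exists n; split; first exact: num_real.
  by move=> M hM v /= hv; apply: le_trans hv (ltW hM).
have /continuous_closedP := @norm_continuous _ 'rV[R]_d.
by move=> /(_ _ (@closed_le _ n)).
Qed.

Definition phi (z y : 'rV[R]_d) := Sform S z y - Sform S z z / 2.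

Lemma phi_cont (T : topologicalType) (a b : T -> 'rV[R]_d) :
  continuous a -> continuous b -> continuous (fun t => phi (a t) (b t)).
Proof.
move=> ca cb t; rewrite /phi.
apply: (@continuousB _ _ _ (fun t0 => Sform S (a t0) (b t0)) (fun t0 => Sform S (a t0) (a t0) / 2)); first exact: Sform_cont.
apply: continuousM; last exact: cst_continuous.
exact: Sform_cont.
Qed.

Lemma closed_le2 (T : topologicalType) (f g : T -> R) :
  continuous f -> continuous g -> closed [set t | f t <= g t].
Proof.
move=> cf cg.
have -> : [set t | f t <= g t] = (fun t => g t - f t) @^-1` [set r | 0 <= r].
  by apply/seteqP; split => t /=; rewrite subr_ge0.
have hc : continuous (fun t => g t - f t).
  by move=> t; exact: (@continuousB _ _ _ g f t (cg t) (cf t)).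
exact: (proj1 (continuous_closedP _) hc _ (@closed_ge _ 0)).
Qed.

Lemma PG_closed (G : set 'rV[R]_d) (T : topologicalType) (a b : T -> 'rV[R]_d) :
  closed G -> continuous a -> continuous b ->
  closed [set t | PG S G (a t) (b t)].
Proof.
move=> cG ca cb.
have -> : [set t | PG S G (a t) (b t)] =
   (b @^-1` G) `&` \bigcap_(z in G) [set t | phi z (a t) <= phi (b t) (a t)].
  apply/seteqP; split => t /=; rewrite /PG /phi /=.
    by move=> [Gb H]; split => // z Gz; exact: H.
  by move=> [Gb H]; split => // z Gz; exact: H.
apply: closedI; first by move/continuous_closedP: cb; apply.
apply: closed_bigI => z _; apply: closed_le2.
  exact: (@phi_cont T (fun=> z) a (@cst_continuous T _ z) ca).
exact: phi_cont.
Qed.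

Lemma G_closed (G : set 'rV[R]_d) : maximal_S_monotone S G -> closed G.
Proof.
move=> [mG maxG].
have qc : forall y : 'rV[R]_d, closed [set x | 0 <= Sform S (x - y) (x - y)].
  move=> y; apply: (@closed_le2 _ (fun=> 0)); first exact: cst_continuous.
  have cy : continuous (fun x : 'rV[R]_d => x - y).
    by move=> x; apply: continuousB => //; exact: cst_continuous.
  exact: Sform_cont.
have qc' : forall x : 'rV[R]_d, closed [set y | 0 <= Sform S (x - y) (x - y)].
  move=> x; apply: (@closed_le2 _ (fun=> 0)); first exact: cst_continuous.
  have cy : continuous (fun y : 'rV[R]_d => x - y).
    by move=> y; apply: continuousB => //; exact: cst_continuous.
  exact: Sform_cont.
have step1 : forall y, G y -> closure G `<=` [set x | 0 <= Sform S (x - y) (x - y)].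
  move=> y Gy x clx; apply: (qc y); move: clx.
  by apply: closureS => z Gz; exact: mG.
have mcl : S_monotone S (closure G).
  move=> x y clx cly.
  have : closure G `<=` [set y | 0 <= Sform S (x - y) (x - y)].
    move=> w clw; apply: (qc' x); move: clw.
    by apply: closureS => z Gz; exact: step1.
  by apply.
have := maxG _ mcl (@subset_closure _ G).
by move=> <-; exact: closed_closure.
Qed.
End S.

Lemma fstc' {U W : topologicalType} : continuous (@fst U W).
Proof. move=> p; exact: cvg_fst. Qed.
Lemma sndc' {U W : topologicalType} : continuous (@snd U W).
Proof. move=> p; exact: cvg_snd. Qed.

Section Bor.
Variable T : topologicalType.
Lemma Borel_sig : sigma_algebra setT (@Borel T).
Proof. exact: smallest_sigma_algebra. Qed.
Lemma BorelC (A : set T) : Borel A -> Borel (~` A).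
Proof. by case: Borel_sig => _ hC _ /hC; rewrite setTD. Qed.
Lemma BorelU (F : nat -> set T) : (forall n, Borel (F n)) -> Borel (\bigcup_n F n).
Proof. by case: Borel_sig => _ _ hU; apply: hU. Qed.
Lemma BorelU2 (A B : set T) : Borel A -> Borel B -> Borel (A `|` B).
Proof.
move=> hA hB; rewrite -bigcup2E; apply: BorelU => -[|[|n]] //=.
by case: Borel_sig.
Qed.
Lemma BorelI (A B : set T) : Borel A -> Borel B -> Borel (A `&` B).
Proof.
move=> hA hB; rewrite -(setCK (A `&` B)) setCI; apply: BorelC.
by apply: BorelU2; apply: BorelC.
Qed.
Lemma Borel_closed (A : set T) : closed A -> Borel A.
Proof.
move=> cA; rewrite -(setCK A); apply: BorelC.
by apply: sub_gen_smallest; exact: closed_openC.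
Qed.
Lemma Borel_Fsigma (A : set T) : F_sigma A -> Borel A.
Proof.
move=> [F [cF ->]]; apply: BorelU => n; exact: Borel_closed.
Qed.
End Bor.

Lemma invlt (R : realType) (x N : R) : 0 < x -> 0 < N -> x^-1 < N -> N^-1 < x.
Proof. move=> hx hN h. by rewrite -[x]invrK ltf_pV2 ?posrE ?invr_gt0. Qed.

Theorem lemma1 (R : realType) (d m : nat) (S : 'M[R]_d) (G : set 'rV[R]_d) :
  in_Sdm m S -> maximal_S_monotone S G ->
  [/\ closed [set p : 'rV[R]_d * 'rV[R]_d | PG S G p.1 p.2],
      closed [set p : 'rV[R]_d * 'rV[R]_d | PG S G p.2 p.1],
      F_sigma [set p : 'rV[R]_d * 'rV[R]_d |
                 PG S G p.2 p.1 /\ ~ (PG S G p.1 `<=` PG S G p.2)]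
    & Borel [set p : 'rV[R]_d * 'rV[R]_d |
                 PG S G p.1 p.1 /\ PG S G p.1 `<=` PG S G p.2]].
Proof.
move=> _ hG.
have cG := @G_closed R d S G hG.
have c1 := @PG_closed R d S G _ fst snd cG fstc' sndc'.
have c2 := @PG_closed R d S G _ snd fst cG sndc' fstc'.
have FB : F_sigma [set p : 'rV[R]_d * 'rV[R]_d |
                 PG S G p.2 p.1 /\ ~ (PG S G p.1 `<=` PG S G p.2)].
  pose K (n : nat) := [set v : 'rV[R]_d | `|v| <= n%:R].
  pose Q (n : nat) : set (('rV[R]_d * 'rV[R]_d) * 'rV[R]_d) :=
    ((K n `*` K n) `*` K n) `&`
    ([set t | PG S G t.1.2 t.1.1] `&` [set t | PG S G t.1.1 t.2] `&`
     [set t | @phi R d S t.2 t.1.2 + n.+1%:R^-1 <= @phi R d S t.1.1 t.1.2]).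
  have c11 : continuous (fun t : ('rV[R]_d * 'rV[R]_d) * 'rV[R]_d => t.1.1).
    by move=> t; apply: (continuous_comp (fstc' t) (fstc' _)).
  have c12 : continuous (fun t : ('rV[R]_d * 'rV[R]_d) * 'rV[R]_d => t.1.2).
    by move=> t; apply: (continuous_comp (fstc' t) (sndc' _)).
  have c3 : continuous (fun t : ('rV[R]_d * 'rV[R]_d) * 'rV[R]_d => t.2).
    exact: sndc'.
  exists (fun n => fst @` Q n); split.
    move=> n; apply: compact_closed; first exact: h1.
    apply: continuous_compact; first exact: continuous_subspaceT fstc'.
    apply: compact_closedI.
      by apply: compact_setX; [apply: compact_setX|]; exact: Kc.
    apply: closedI; [apply: closedI|].
    - exact: (@PG_closed R d S G _ _ _ cG c12 c11).
    - exact: (@PG_closed R d S G _ _ _ cG c11 c3).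
    - apply: closed_le2; last exact: phi_cont.
      move=> t; apply: (@continuousD _ _ _ (fun t => @phi R d S t.2 t.1.2) (fun=> n.+1%:R^-1)).
        exact: phi_cont.
      exact: cst_continuous.
  apply/seteqP; split.
    move=> [x y] /= [xPy nsub].
    case: (pselect (exists2 w, PG S G x w & ~ PG S G y w)) => [[w Pxw nPyw]|no];
      last first.
      exfalso; apply: nsub => w hw; apply: contrapT => hn; apply: no; exists w => //.
    have Gw : G w := Pxw.1.
    have gap : @phi R d S w y < @phi R d S x y.
      rewrite ltNge; apply/negP => hle; apply: nPyw; split => // z Gz.
      exact: le_trans (xPy.2 z Gz) hle.
    pose dl := @phi R d S x y - @phi R d S w y.
    have dl0 : 0 < dl by rewrite subr_gt0.
    pose n := (Num.Def.trunc dl^-1 + Num.Def.trunc `|x| + Num.Def.trunc `|y|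
               + Num.Def.trunc `|w|).+1.
    have bnd : forall r : R, (Num.Def.trunc r < n)%N -> r < n%:R.
      by move=> r hr; apply: lt_le_trans (truncnS_gt r) _; rewrite ler_nat.
    exists n => //; exists ((x, y), w) => //.
    split; first split; first split.
    - by apply: ltW; apply: bnd; rewrite /n ltnS /=; lia.
    - by apply: ltW; apply: bnd; rewrite /n ltnS /=; lia.
    - by apply: ltW; apply: bnd; rewrite /n ltnS /=; lia.
    split; first by split.
    have hdn : dl^-1 < n.+1%:R.
      apply: lt_trans (bnd _ _) _; first by rewrite /n ltnS; lia.
      by rewrite ltr_nat.
    have := @invlt R _ _ dl0 (ltr0Sn _ _) hdn.
    have key : forall a b c : R, c < a - b -> b + c <= a by move=> *; lra.
    by move=> h; apply: key.
  move=> p [n _ [[[x y] w] [_ [[h1 h2] h3]] <-]] /=.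
  split => // hs.
  have [_ hw] := hs _ h2.
  have hc : 0 < n.+1%:R^-1 :> R by rewrite invr_gt0 ltr0Sn.
  have key2 : forall a b c : R, 0 < c -> b + c <= a -> a <= b -> False.
    by move=> *; lra.
  exact: (key2 _ _ _ hc h3 (hw x h1.1)).
have cD := @PG_closed R d S G _ fst fst cG fstc' fstc'.
have -> : [set p : 'rV[R]_d * 'rV[R]_d |
                 PG S G p.1 p.1 /\ PG S G p.1 `<=` PG S G p.2] =
  [set p | PG S G p.1 p.1] `&` ([set p | PG S G p.2 p.1] `&`
    ~` [set p | PG S G p.2 p.1 /\ ~ (PG S G p.1 `<=` PG S G p.2)]).
  apply/seteqP; split => -[x y] /=.
    move=> [hxx hsub]; split => //; split; first exact: hsub _ hxx.
    by move=> [_ nsub]; exact: nsub hsub.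
  move=> [hxx [hyx nB]]; split => // w hw; apply: contrapT => nw.
  by apply: nB; split => // hs; exact: nw (hs _ hw).
split => //.
apply: BorelI; first exact: Borel_closed.
apply: BorelI; first exact: Borel_closed.
by apply: BorelC; exact: Borel_Fsigma.
Qed.
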